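(* Let $P$ be a multiprogram in which at most one thread per process calls deliver, and let $\widehat C$ be a finite computation of $\mathrm{TS}(P)$ satisfying $\mathrm{NW}$. Let $m_1,m_2$ be ORD messages carrying labels $g$ and $h$ with $h\neq\bot$ and queue elements $qe_1,qe_2$ respectively, with $qe_1.ts\le qe_2.ts$. Then for every process $\widehat p$ that performs an extractmin on $\mathrm{priorityQ}[h]$ returning $qe_2$, the enqueue by $\widehat p$ of $qe_1$ (into $\mathrm{priorityQ}[g]$ if $g\ne\bot$, or into the appropriate FIFO queue if $g=\bot$) precedes that extractmin in $\widehat p$'s program order.
   Context: $\mathrm{NW}$ (message-passing network model): processes communicate by $\mathrm{send}(s,d,m)$/$\mathrm{recv}(s,d,m)$ of uniquely identified messages; messages from a given sender to a given receiver are received in the order sent (FIFO channels), each message is received at most once and only after being sent; threads within a process share local variables whose accesses are sequentially consistent. Formally $\mathrm{NW}(C)$ holds iff for each process there is a valid total order of its operations extending $\to_{\mathrm{HappensBefore}}$, the transitive closure of program order, send-before-receive, FIFO-channel order, and writes-into order on local variables; and messages are received iff sent. The timestamp transformation $\mathrm{TS}$. Each process $\widehat p$ has: integer local-counter (initially 0); arrays $\mathrm{counter}[\cdot]$ and $T[\cdot]$ indexed by processes, initially 0; a priority queue $\mathrm{priorityQ}[l]$ for each label $l\in L$ ordered by (timestamp, source) lexicographically; a FIFO queue $\mathrm{fifoQ}[\widehat q]$ for each process $\widehat q$. Queue elements are $[u,ts,c,src]$. $\mathrm{bcast}(u,l)$ ($l\in L\cup\{\bot\}$): send $[\mathrm{LBR},u,l]$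 to $\widehat p$ itself. ProcessQueueElement$(qe,l,s)$: enqueue $qe$ into $\mathrm{priorityQ}[l]$ if $l\neq\bot$, else into $\mathrm{fifoQ}[s]$. HandleMessage: receive a message from some $\widehat s$; if $[\mathrm{LBR},u,l]$: $T[\widehat p]\gets T[\widehat p]+1$, local-counter $\gets$ local-counter$+1$, $qe\gets[u,T[\widehat p],\text{local-counter},\widehat p]$, ProcessQueueElement$(qe,l,\widehat p)$, send $[\mathrm{ORD},l,qe]$ to every other process; if $[\mathrm{TSUPD},t,\widehat q]$: $T[\widehat q]\gets t$; if $[\mathrm{ORD},l,qe]$: $T[\widehat s]\gets qe.ts$, ProcessQueueElement$(qe,l,\widehat s)$, and if $qe.ts>T[\widehat p]$ then $T[\widehat p]\gets qe.ts$ and send $[\mathrm{TSUPD},T[\widehat p],\widehat p]$ to every other process. CanExtract$(\mathrm{priorityQ}[l])$ holds iff the queue is nonempty and its minimum $qe$ satisfies $qe.c=\mathrm{counter}[qe.src]+1$ and $qe.ts\le T[\widehat q]$ for all $\widehat q$. CanDequeue$(\mathrm{fifoQ}[\widehat q])$ holds iff nonempty and its head $qe$ satisfies $qe.c=\mathrm{counter}[qe.src]+1$. deliver: while no priority queue satisfies CanExtract and no FIFO queue satisfies CanDequeue, call HandleMessage; then remove an element $qe$ from such a queue (extractmin, or FIFO dequeue), set $\mathrm{counter}[qe.src]\gets qe.c$, and return $qe.u$ with its label ($\bot$ for FIFO). Reads/writes of the original program are mapped to themselves. A queue element $qe$ sent in an ORD message is the element created by its source $qe.src$ when handling an LBR message.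 *)

(* Defs.v *)
From mathcomp Require Import all_boot.
From Stdlib Require Import List.
Import ListNotations.

Set Implicit Arguments.
Unset Strict Implicit.
Unset Printing Implicit Defensive.

(* Operational model of a computation of TS(P) in the NW model, where at most
   one thread per process (the "deliver thread") calls deliver.  Processes are
   'I_n (their order is the nat order, used for tie breaking by source);
   U = payload type; L = label type; labels in L \cup {bot} are [option L]
   (None = bot).  Channels are FIFO: chan s d is the sequence of messages sent
   by s to d and not yet received, oldest first. *)

Section TS.
Variables (U : Type) (L : eqType) (n : nat).

Record qelem := QE { qu : U; qts : nat; qc : nat; qsrc : 'I_n }.

Inductive msg :=
| MLBR (u : U) (l : option L)
| MTSUPD (t : nat) (q : 'I_n)
| MORD (l : option L) (qe : qelem).

Record lstate := LState {
  lc : nat;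
  ctr : 'I_n -> nat;
  Ts : 'I_n -> nat;
  pq : L -> list qelem;   (* priority queue as a multiset *)
  fq : 'I_n -> list qelem (* FIFO queue, head first *)
}.

Record gstate := GState {
  loc : 'I_n -> lstate;
  chan : 'I_n -> 'I_n -> list msg
}.

Definition upd {A : eqType} {B : Type} (f : A -> B) (x : A) (v : B) : A -> B :=
  fun y => if y == x then v else f y.

Definition send (s d : 'I_n) (m : msg) (ch : 'I_n -> 'I_n -> list msg) :=
  fun a b => if (a == s) && (b == d) then ch a b ++ [m] else ch a b.

Definition send_others (s : 'I_n) (m : msg) (ch : 'I_n -> 'I_n -> list msg) :=
  fun a b => if (a == s) && (b != s) then ch a b ++ [m] else ch a b.

Definition pop (s d : 'I_n) (ch : 'I_n -> 'I_n -> list msg) :=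
  fun a b => if (a == s) && (b == d) then List.tl (ch a b) else ch a b.

Definition set_lc (ls : lstate) c := LState c (ctr ls) (Ts ls) (pq ls) (fq ls).
Definition set_ctr (ls : lstate) f := LState (lc ls) f (Ts ls) (pq ls) (fq ls).
Definition set_Ts (ls : lstate) f := LState (lc ls) (ctr ls) f (pq ls) (fq ls).
Definition set_pq (ls : lstate) f := LState (lc ls) (ctr ls) (Ts ls) f (fq ls).
Definition set_fq (ls : lstate) f := LState (lc ls) (ctr ls) (Ts ls) (pq ls) f.

Definition enqueue (ls : lstate) (l : option L) (s : 'I_n) (qe : qelem) :=
  match l with
  | Some l' => set_pq ls (upd (pq ls) l' (qe :: pq ls l'))
  | None => set_fq ls (upd (fq ls) s (fq ls s ++ [qe]))
  end.

Definition lex_lt (a b : qelem) : Prop :=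
  qts a < qts b \/ (qts a = qts b /\ (nat_of_ord (qsrc a) < nat_of_ord (qsrc b))%N).

Definition is_min (qe : qelem) (q : list qelem) : Prop :=
  In qe q /\ forall x, In x q -> ~ lex_lt x qe.

Definition CanExtract (ls : lstate) (l : L) (qe : qelem) : Prop :=
  is_min qe (pq ls l) /\ qc qe = ctr ls (qsrc qe) + 1 /\
  forall q, qts qe <= Ts ls q.

Definition CanDequeue (ls : lstate) (q : 'I_n) (qe : qelem) : Prop :=
  (exists rest, fq ls q = qe :: rest) /\ qc qe = ctr ls (qsrc qe) + 1.

Definition some_ready (ls : lstate) : Prop :=
  (exists l qe, CanExtract ls l qe) \/ (exists q qe, CanDequeue ls q qe).

(* EBcast is a bcast call (by any thread);
   ELBR/ETSUPD/EORD are the HandleMessage calls of the deliver thread of p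
   (ELBR and EORD record the element they enqueue); EExtract / EDequeue are
   the final extraction step of a deliver call. *)
Inductive event :=
| EBcast (p : 'I_n) (u : U) (l : option L)
| ELBR (p : 'I_n) (u : U) (l : option L) (qe : qelem)
| ETSUPD (p s : 'I_n) (t : nat) (q : 'I_n)
| EORD (p s : 'I_n) (l : option L) (qe : qelem)
| EExtract (p : 'I_n) (l : L) (qe : qelem)
| EDequeue (p q : 'I_n) (qe : qelem).

Definition step (st : gstate) (ev : event) (st' : gstate) : Prop :=
  match ev with
  | EBcast p u l =>
      st' = GState (loc st) (send p p (MLBR u l) (chan st))
  | ELBR p u l qe =>
      let ls := loc st p in
      ~ some_ready ls /\
      (exists rest, chan st p p = MLBR u l :: rest) /\
      let t := Ts ls p + 1 in
      let c := lc ls + 1 in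
      qe = QE u t c p /\
      st' = GState
              (upd (loc st) p (enqueue (set_Ts (set_lc ls c) (upd (Ts ls) p t)) l p qe))
              (send_others p (MORD l qe) (pop p p (chan st)))
  | ETSUPD p s t q =>
      let ls := loc st p in
      ~ some_ready ls /\
      (exists rest, chan st s p = MTSUPD t q :: rest) /\
      st' = GState (upd (loc st) p (set_Ts ls (upd (Ts ls) q t))) (pop s p (chan st))
  | EORD p s l qe =>
      let ls := loc st p in
      ~ some_ready ls /\
      (exists rest, chan st s p = MORD l qe :: rest) /\
      let ls2 := enqueue (set_Ts ls (upd (Ts ls) s (qts qe))) l s qe in
      (if Ts ls2 p < qts qe then
         st' = GState (upd (loc st) p (set_Ts ls2 (upd (Ts ls2) p (qts qe))))
                      (send_others p (MTSUPD (qts qe) p) (pop s p (chan st)))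
       else
         st' = GState (upd (loc st) p ls2) (pop s p (chan st)))
  | EExtract p l qe =>
      let ls := loc st p in
      CanExtract ls l qe /\
      exists q1 q2, pq ls l = q1 ++ qe :: q2 /\
        st' = GState (upd (loc st) p
                 (set_ctr (set_pq ls (upd (pq ls) l (q1 ++ q2)))
                          (upd (ctr ls) (qsrc qe) (qc qe))))
                 (chan st)
  | EDequeue p q qe =>
      let ls := loc st p in
      CanDequeue ls q qe /\
      exists rest, fq ls q = qe :: rest /\
        st' = GState (upd (loc st) p
                 (set_ctr (set_fq ls (upd (fq ls) q rest))
                          (upd (ctr ls) (qsrc qe) (qc qe))))
                 (chan st)
  end.

Definition init_lstate : lstate :=
  LState 0 (fun _ => 0) (fun _ => 0) (fun _ => []) (fun _ => []).

Definition init_state : gstate :=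
  GState (fun _ => init_lstate) (fun _ _ => []).

(* a finite computation of length k: states st 0 .. st k, events ev 0 .. ev (k-1) *)
Definition computation (st : nat -> gstate) (ev : nat -> event) (k : nat) : Prop :=
  st 0 = init_state /\ forall i, i < k -> step (st i) (ev i) (st (S i)).

(* "every message is received iff it is sent": no message is left in transit *)
Definition all_received (g : gstate) : Prop :=
  forall s d, chan g s d = [].

Definition sent (st : nat -> gstate) (k : nat) (s d : 'I_n) (m : msg) : Prop :=
  exists i, i <= k /\ In m (chan (st i) s d).

Definition enqueue_of (ev : event) : option ('I_n * option L * qelem) :=
  match ev with
  | ELBR p _ l qe => Some (p, l, qe)
  | EORD p _ l qe => Some (p, l, qe)
  | _ => None
  end.

End TS.

(* Main.v *)
Require Import Defs.
From mathcomp Require Import all_boot zify.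
From Stdlib Require Import List.
Import ListNotations.

Section Proof.
Variables (U : Type) (L : eqType) (n : nat).

Definition tsof (m : msg U L n) : nat :=
  match m with MLBR _ _ => 0 | MTSUPD t _ => t | MORD _ qe => qts qe end.

Definition shape (s d : 'I_n) (m : msg U L n) : Prop :=
  match m with MLBR _ _ => True | MTSUPD _ q => q = s /\ s <> d | MORD _ _ => s <> d end.

Definition consumes (ev : event U L n) (b a : 'I_n) (m : msg U L n) : Prop :=
  match m with
  | MLBR u l => a = b /\ exists qe, ev = ELBR b u l qe
  | MTSUPD t q => ev = @ETSUPD U L n b a t q
  | MORD l qe => ev = EORD b a l qe
  end.

Definition SH (st : gstate U L n) := forall s d m, In m (chan st s d) -> shape s d m.

Lemma Ts_enqueue (ls : lstate U L n) l s qe : Ts (enqueue ls l s qe) = Ts ls.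
Proof. by case: l. Qed.

Lemma chan_step (st : gstate U L n) ev st' a b : step st ev st' ->
  chan st' a b = chan st a b
  \/ (exists m, chan st a b = m :: chan st' a b /\ consumes ev b a m)
  \/ (exists m, chan st' a b = chan st a b ++ [m] /\ shape a b m /\
        tsof m <= Ts (loc st' a) a /\
        (forall l qe, m = MORD l qe -> exists u, ev = ELBR a u l qe)).
Proof.
case: ev => [p u l | p u l qe | p s t q | p s l qe | p l qe | p q qe] /=.
- move=> ->; rewrite /send /=.
  case: ifP => [/andP[/eqP-> /eqP->] | _]; last by left.
  right; right; exists (@MLBR U L n u l); split=> //; split=> //.
- move=> [_ [[rest Hr] [Hqe ->]]] /=; rewrite /send_others /pop.
  case: (eqVneq a p) => [->|nap]; last by left.
  rewrite /=; case: (eqVneq b p) => [->|nbp].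
    rewrite /= Hr /=; right; left; exists (@MLBR U L n u l); split=> //; split=> //.
    by exists qe.
  rewrite /=; right; right; exists (MORD l qe); split=> //; split.
    by move=> E; move: nbp; rewrite E eqxx.
  split; last by move=> l' qe' [<- <-]; exists u.
  rewrite /upd eqxx Ts_enqueue /= eqxx Hqe /=; lia.
- move=> [_ [[rest Hr] ->]] /=; rewrite /pop.
  case: ifP => [/andP[/eqP-> /eqP->] | _]; last by left.
  rewrite Hr /=; right; left; exists (@MTSUPD U L n t q); split=> //.
- move=> [_ [[rest Hr] Hif]]; move: Hif; case: ifP => Hc -> /=.
    rewrite /send_others /pop.
    case: (eqVneq a s) => [->|nas].
      case: (eqVneq b p) => [->|nbp].
        rewrite ?eqxx ?andbF /= Hr /=; right; left; exists (MORD l qe); split=> //.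
      rewrite ?eqxx ?andbF ?andbT /=.
      case: (eqVneq s p) => [Esp|nsp]; last by left.
      rewrite /=; right; right; exists (@MTSUPD U L n (qts qe) p); split=> //.
      split; first by split; [rewrite Esp | move=> E; move: nbp; rewrite -E Esp eqxx].
      split=> //. by rewrite Esp /upd eqxx /= eqxx.
    rewrite /=.
    case: (eqVneq a p) => [Eap|nap]; last by left.
    case: (eqVneq b p) => [Ebp|nbp]; first by left; rewrite /= ?andbF.
    rewrite /=; right; right; exists (@MTSUPD U L n (qts qe) p); split=> //.
    split; first by split; [rewrite Eap | move=> E; move: nbp; rewrite -E Eap eqxx].
    split=> //. by rewrite Eap /upd eqxx /= eqxx.
  rewrite /pop.
  case: ifP => [/andP[/eqP-> /eqP->] | _]; last by left.
  rewrite Hr /=; right; left; exists (MORD l qe); split=> //.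
- by move=> [_ [q1 [q2 [_ ->]]]]; left.
- by move=> [_ [rest [_ ->]]]; left.
Qed.

Lemma Ts_step (st : gstate U L n) ev st' x y : step st ev st' -> SH st ->
  Ts (loc st' x) y = Ts (loc st x) y
  \/ (x = y /\ Ts (loc st x) x < Ts (loc st' x) x)
  \/ (x <> y /\ exists m, chan st y x = m :: chan st' y x /\ Ts (loc st' x) y = tsof m).
Proof.
case: ev => [p u l | p u l qe | p s t q | p s l qe | p l qe | p q qe] /=.
- by move=> -> _; left.
- move=> [_ [_ [_ ->]]] _ /=; rewrite /upd.
  case: (eqVneq x p) => [->|nxp]; last by left.
  rewrite ?eqxx Ts_enqueue /=; case: (eqVneq y p) => [->|nyp].
    by right; left; split=> //; rewrite /upd eqxx; lia.
  by left; rewrite /upd ?(negbTE nyp).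
- move=> [_ [[rest Hr] ->]] HS /=.
  have [Eq nsp] : q = s /\ s <> p by apply: (HS s p (@MTSUPD U L n t q)); rewrite Hr; left.
  subst q; rewrite /upd.
  case: (eqVneq x p) => [->|nxp]; last by left.
  rewrite ?eqxx /=; case: (eqVneq y s) => [->|nys].
    right; right; split; first by move=> E; apply: nsp; rewrite E.
    exists (@MTSUPD U L n t s); rewrite /pop ?eqxx Hr /=; split=> //.
  by left.
- move=> [_ [[rest Hr] Hif]] HS.
  have nsp : s <> p by apply: (HS s p (MORD l qe)); rewrite Hr; left.
  have Hch : forall ch : 'I_n -> 'I_n -> list (msg U L n),
      send_others p (@MTSUPD U L n (qts qe) p) (pop s p ch) s p = pop s p ch s p.
    by move=> ch; rewrite /send_others eqxx andbF.
  move: Hif; case: ifP => Hc -> /=; rewrite /upd.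
    case: (eqVneq x p) => [->|nxp]; last by left.
    rewrite ?eqxx /= Ts_enqueue /=.
    case: (eqVneq y p) => [->|nyp].
      right; left; split=> //; move: Hc; rewrite /upd eqxx Ts_enqueue /=.
      by have -> : (p == s) = false by apply/eqP=> E; apply: nsp.
    case: (eqVneq y s) => [->|nys].
      right; right; split; first by move=> E; apply: nsp; rewrite E.
      exists (MORD l qe); rewrite Hch /pop ?eqxx Hr /=; split=> //.
      idtac.
    by left.
  case: (eqVneq x p) => [->|nxp]; last by left.
  rewrite ?eqxx /= Ts_enqueue /=.
  case: (eqVneq y s) => [->|nys].
    right; right; split; first by move=> E; apply: nsp; rewrite E.
    exists (MORD l qe); rewrite /pop ?eqxx Hr /=; split=> //.
    idtac.
  by left; rewrite /upd ?(negbTE nys).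
- move=> [_ [q1 [q2 [_ ->]]]] _ /=; rewrite /upd.
  by case: (eqVneq x p) => [->|nxp]; left.
- move=> [_ [rest [_ ->]]] _ /=; rewrite /upd.
  by case: (eqVneq x p) => [->|nxp]; left.
Qed.

End Proof.
Arguments SH {U L n} st.
Arguments tsof {U L n} m.
Arguments chan_step {U L n st ev st'} a b _.
Arguments Ts_step {U L n st ev st'} x y _ _.

Theorem mainTheorem6 (U : Type) (L : eqType) (n : nat)
    (st : nat -> gstate U L n) (ev : nat -> event U L n) (k : nat)
    (Hcomp : computation st ev k)
    (Hnw : all_received (st k))
    (g : option L) (h : L) (qe1 qe2 : qelem U n) (s1 d1 s2 d2 : 'I_n)
    (Hm1 : sent st k s1 d1 (MORD g qe1))
    (Hm2 : sent st k s2 d2 (MORD (Some h) qe2))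
    (Hts : qts qe1 <= qts qe2)
    (p : 'I_n) (j : nat) (Hj : j < k)
    (Hext : ev j = EExtract p h qe2) :
  exists i, i < j /\ enqueue_of (ev i) = Some (p, g, qe1).
Proof.
move: Hcomp => [H0 Hstep].
have SHall : forall i, i <= k -> SH (st i).
  elim=> [_|i IH Hi]; first by rewrite H0 => s d m [].
  move=> s d m Hin; have Hs := Hstep i Hi; have HSi := IH (ltnW Hi).
  case: (chan_step s d Hs) => [E | [[m0 [E _]] | [m0 [E [Hsh _]]]]].
  - rewrite E in Hin; exact: HSi.
  - apply: HSi; rewrite E; by right.
  - rewrite E in Hin; case: (in_app_or _ _ _ Hin) => [Hin2|[<-|[]]]; [exact: (HSi _ _ _ Hin2) | exact Hsh].
have ORIG : forall i, i <= k -> forall s d l qe, In (MORD l qe) (chan (st i) s d) ->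
    exists c u, c < i /\ ev c = ELBR s u l qe.
  elim=> [_|i IH Hi]; first by rewrite H0 => ? ? ? ? [].
  move=> s d l qe Hin; have Hs := Hstep i Hi.
  case: (chan_step s d Hs) => [E | [[m0 [E _]] | [m0 [E [_ [_ Ho]]]]]].
  - rewrite E in Hin; have [c [u [Hc Hev]]] := IH (ltnW Hi) _ _ _ _ Hin.
    by exists c, u; split=> //; lia.
  - have : In (MORD l qe) (chan (st i) s d) by rewrite E; right.
    move/(IH (ltnW Hi)) => [c [u [Hc Hev]]]; by exists c, u; split=> //; lia.
  - rewrite E in Hin; case: (in_app_or _ _ _ Hin) => [Hin2|[Em|[]]].
      have [c [u [Hc Hev]]] := IH (ltnW Hi) _ _ _ _ Hin2.
      by exists c, u; split=> //; lia.
    have [u Hu] := Ho l qe Em; by exists i, u; split.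
have Mono : forall x i i', i <= i' -> i' <= k ->
    Ts (loc (st i) x) x <= Ts (loc (st i') x) x.
  move=> x i; elim=> [|i' IH] Hii' Hk.
    by have -> : i = 0 by lia.
  case: (eqVneq i i'.+1) => [->//|Hne].
  have Hi : i <= i' by lia.
  apply: leq_trans (IH Hi (ltnW Hk)) _.
  case: (Ts_step x x (Hstep i' Hk) (SHall i' (ltnW Hk))) => [->//|[[_ H]|[H _]]].
    exact: ltnW.
  by case: H.
case: Hm1 => [i1 [Hi1 Hin1]].
have [c [u [Hc Hevc]]] := ORIG i1 Hi1 _ _ _ _ Hin1.
have Hck : c < k by lia.
have Hsc := Hstep c Hck; rewrite Hevc /= in Hsc.
case: Hsc => [_ [[rest1 Hr1] [Hqe1 Hst1]]].
have Ht1 : qts qe1 = Ts (loc (st c) s1) s1 + 1 by rewrite Hqe1.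
have Hsj := Hstep j Hj; rewrite Hext /= in Hsj.
case: Hsj => [[_ [_ Hge]] _].
case: (eqVneq p s1) => [Eps|Nps].
  subst p.
  case: (ltnP c j) => Hcj; first by exists c; split=> //; rewrite Hevc.
  have := Mono s1 j c Hcj (ltnW Hck); have := Hge s1; lia.
have Hnp : p <> s1 by apply/eqP.
have W : forall i, i <= k ->
  (i <= c -> Ts (loc (st i) p) s1 < qts qe1 /\
             forall m, In m (chan (st i) s1 p) -> tsof m < qts qe1) /\
  (c < i -> (exists i', i' < i /\ ev i' = EORD p s1 g qe1) \/
     (Ts (loc (st i) p) s1 < qts qe1 /\ exists pre post,
        chan (st i) s1 p = pre ++ MORD g qe1 :: post /\
        forall m, In m pre -> tsof m < qts qe1)).
  elim=> [_|i IH Hi].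
    split; last by [].
    move=> _; rewrite H0 /=; split; [lia | by move=> m []].
  have [IH1 IH2] := IH (ltnW Hi); have Hs := Hstep i Hi; have HSi := SHall i (ltnW Hi).
  have Tstep := Ts_step p s1 Hs HSi.
  have Cstep := chan_step s1 p Hs.
  split.
    move=> Hic; have [IHa IHb] := IH1 (ltnW Hic).
    split.
      case: Tstep => [->//|[[E _]|[_ [m [Hm ->]]]]]; first by case: Hnp.
      by apply: IHb; rewrite Hm; left.
    move=> m Hin; case: Cstep => [E|[[m0 [E _]]|[m0 [E [_ [Hts0 _]]]]]].
    - by rewrite E in Hin; apply: IHb.
    - by apply: IHb; rewrite E; right.
    - rewrite E in Hin; case: (in_app_or _ _ _ Hin) => [/IHb //|[<-|[]]].
      have := Mono s1 i.+1 c Hic (ltnW Hck); lia.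
  move=> Hci.
  case: (eqVneq i c) => [Eic|Nic].
    right; have [IHa IHb] := IH1 (eq_leq Eic); split.
      case: Tstep => [->//|[[E _]|[_ [m [Hm ->]]]]]; first by case: Hnp.
      by apply: IHb; rewrite Hm; left.
    exists (chan (st i) s1 p), [::]; split=> //.
    rewrite Eic Hst1 /= /send_others /pop eqxx Nps (negbTE Nps) /=.
    by [].
  have Hci' : c < i by lia.
  case: (IH2 Hci') => [[i' [Hi' Hev']]|[Hlt [pre [post [Ech Hpre]]]]].
    by left; exists i'; split=> //; lia.
  case: pre Ech Hpre => [|m0 pre'] Ech Hpre.
    case: Cstep => [E|[[m [E Hcons]]|[m [E _]]]].
    - right; split.
        case: Tstep => [->//|[[E' _]|[_ [m [Hm _]]]]]; first by case: Hnp.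
        by move: Hm; rewrite E => /(f_equal (@length _)) /=; lia.
      by exists [::], post; rewrite E Ech.
    - left; exists i; split=> //.
      rewrite Ech /= in E; case: E => Em _; subst m; exact: Hcons.
    - right; split.
        case: Tstep => [->//|[[E' _]|[_ [m' [Hm _]]]]]; first by case: Hnp.
        move: Hm; rewrite E => /(f_equal (@length _)). rewrite /= length_app /=; lia.
      exists [::], (post ++ [m]); rewrite E Ech; split=> //.
  right; split.
    case: Tstep => [->//|[[E' _]|[_ [m [Hm ->]]]]]; first by case: Hnp.
    rewrite Ech /= in Hm; case: Hm => <- _; by apply: Hpre; left.
  case: Cstep => [E|[[m [E _]]|[m [E _]]]].
  - by exists (m0 :: pre'), post; rewrite E Ech.
  - rewrite Ech /= in E; case: E => _ E.
    exists pre', post; split; first by rewrite -E.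
    by move=> x Hx; apply: Hpre; right.
  - exists (m0 :: pre'), (post ++ [m]); rewrite E Ech; split; last by [].
    by rewrite -app_assoc.
have [W1 W2] := W j (ltnW Hj).
case: (ltnP c j) => Hcj.
  case: (W2 Hcj) => [[i' [Hi' Hev']]|[Hlt _]].
    by exists i'; split=> //; rewrite Hev'.
  have := Hge s1; lia.
have [Hlt _] := W1 Hcj; have := Hge s1; lia.
Qed.
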